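(* Let $A_{n,m}=\langle\varphi,\psi,\tau\rangle$ be the subgroup of $\operatorname{Aut}(Y_{n,m})$ generated by the maps $\varphi,\psi,\tau$ defined below. Then: (1) $A_{1,0}\cong\{1\}$ and $A_{2,0}\cong A_{1,1}\cong C_2$; (2) $A_{n,0}\cong D_n$ for all $n>2$; (3) $A_{1,m}\cong C_2\times C_2$ for all $m>1$; (4) if $n>1$ and $m>0$, then (a) if at least one of $n,m$ is odd, $A_{n,m}\cong D_{2n}$; (b) otherwise ($n$ and $m$ both even), $A_{n,m}\cong D_n\times C_2$.
   Context: For integers $n\ge1$, $m\ge0$, the Yoke graph $Y_{n,m}$ has vertices the tuples $v=(v_0,\dots,v_{m+1})$ with $v_0,v_{m+1}\in\mathbb{Z}_n$, $v_1,\dots,v_m\in\{0,1\}$, $\sum v_i\equiv0\pmod n$; $u\sim v$ iff there is $0\le i\le m$ with $u_j=v_j$ for $j\notin\{i,i+1\}$ and either ($u_i=v_i+1$, $u_{i+1}=v_{i+1}-1$) or ($u_i=v_i-1$, $u_{i+1}=v_{i+1}+1$), bucket entries computed mod $n$. Define maps on vertices (bucket entries mod $n$): $\varphi(v_0,v_1,\dots,v_m,v_{m+1})=(v_0+1,v_1,\dots,v_m,v_{m+1}-1)$; $\psi(v_0,\dots,v_{m+1})=(v_{m+1},v_m,\dots,v_1,v_0)$; $\tau(v_0,v_1,\dots,v_m,v_{m+1})=(-v_0,1-v_1,\dots,1-v_m,-(m+v_{m+1}))$. These are automorphisms of $Y_{n,m}$. $C_k$ is the cyclic group of order $k$, and $D_k$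 is the dihedral group of order $2k$, $D_k=\langle g,h\mid g^k=h^2=1,\ hgh=g^{-1}\rangle$. *)

(* Defs.v *)
From HB Require Import structures.
From mathcomp Require Import all_boot all_fingroup all_solvable zmodp.
From mathcomp Require Import zify.

Set Implicit Arguments.
Unset Strict Implicit.
Unset Printing Implicit Defensive.

(* (For n = 0 the type 'I_0 is empty, hence so is the vertex set; the       *)
(*  theorem only ever uses n >= 1.)                                         *)

Lemma ord_pos n (x : 'I_n) : 0 < n.
Proof. exact: leq_ltn_trans (leq0n x) (ltn_ord x). Qed.

Definition zadd n (x : 'I_n) (k : nat) : 'I_n :=
  Ordinal (ltn_pmod (x + k) (ord_pos x)).

Definition zopp n (x : 'I_n) : 'I_n :=
  Ordinal (ltn_pmod (n - x) (ord_pos x)).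

Lemma zadd_inj n k : injective (fun x : 'I_n => zadd x k).
Proof.
move=> x y /(congr1 val) /= /eqP; rewrite eqn_modDr => /eqP.
by rewrite !modn_small // => /val_inj.
Qed.

Lemma zopp_inj n : injective (@zopp n).
Proof.
move=> x y /(congr1 val) /= /eqP H; apply/val_inj => /=.
move: H; rewrite -(eqn_modDr (x + y)).
rewrite addnA subnK; last exact: ltnW.
rewrite (addnC x) addnA subnK; last exact: ltnW.
by rewrite eqn_modDl !modn_small // => /eqP ->.
Qed.

(* A tuple (v_0, v_1, ..., v_m, v_{m+1}) is encoded as ((v_0, t), v_{m+1})  *)
(* where t = [v_1; ...; v_m] is an m-tuple of bits (true = 1, false = 0).   *)

Definition yraw (n m : nat) := ('I_n * m.-tuple bool * 'I_n)%type.

Definition ysum n m (x : yraw n m) : nat := x.1.1 + count id x.1.2 + x.2.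

Definition yoke_vertex n m (x : yraw n m) : bool := ysum x %% n == 0.

Definition yvert (n m : nat) := {x : yraw n m | yoke_vertex x}.

(* phi(v_0, v_1..v_m, v_{m+1}) = (v_0 + 1, v_1..v_m, v_{m+1} - 1) *)
Definition phi_raw n m (x : yraw n m) : yraw n m :=
  (zadd x.1.1 1, x.1.2, zadd x.2 (n - 1)).

Definition psi_raw n m (x : yraw n m) : yraw n m :=
  (x.2, [tuple of rev x.1.2], x.1.1).

(* tau(v_0, v_1..v_m, v_{m+1}) = (-v_0, 1-v_1..1-v_m, -(m + v_{m+1})) *)
Definition tau_raw n m (x : yraw n m) : yraw n m :=
  (zopp x.1.1, map_tuple negb x.1.2, zopp (zadd x.2 m)).

Lemma modn3 n x y z : (x %% n + y + z %% n) %% n = (x + y + z) %% n.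
Proof. by rewrite modnDmr -!addnA modnDml. Qed.

Lemma phi_raw_ok n m (x : yraw n m) : yoke_vertex x -> yoke_vertex (phi_raw x).
Proof.
case: x => [[a t] b]; rewrite /yoke_vertex /ysum /= => /eqP H.
have n0 := ord_pos a.
apply/eqP; rewrite modn3.
have -> : a + 1 + count id t + (b + (n - 1)) = a + count id t + b + n by lia.
by rewrite modnDr.
Qed.

Lemma psi_raw_ok n m (x : yraw n m) : yoke_vertex x -> yoke_vertex (psi_raw x).
Proof.
case: x => [[a t] b]; rewrite /yoke_vertex /ysum /= count_rev => H.
by have -> : b + count id t + a = a + count id t + b by lia.
Qed.

Lemma tau_raw_ok n m (x : yraw n m) : yoke_vertex x -> yoke_vertex (tau_raw x).
Proof.
case: x => [[a t] b]; rewrite /yoke_vertex /ysum /= => /eqP H.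
have n0 := ord_pos a.
have Hc : count id (map negb t) = m - count id t.
  rewrite count_map -[X in X - _](size_tuple t) -(count_predC id t).
  by rewrite addKn; apply: eq_count.
rewrite Hc modn3.
have ha : a < n := ltn_ord a.
have hc : count id t <= m by rewrite -{2}(size_tuple t) count_size.
set r := (b + m) %% n.
have hr : r < n by rewrite ltn_pmod.
have hr2 : r <= b + m by rewrite leq_mod.
apply/eqP.
have E : (n - a + (m - count id t) + (n - r) + (a + count id t + b)) %% n = 0.
  have -> : n - a + (m - count id t) + (n - r) + (a + count id t + b)
            = n + (n + (b + m - r)) by lia.
  rewrite modnDl modnDl {1}(divn_eq (b + m) n) -/r addnK modnMl //.
by rewrite -modnDmr H addn0 in E.
Qed.

Lemma phi_raw_inj n m : injective (@phi_raw n m).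
Proof.
move=> [[a t] b] [[a' t'] b'] E.
have /zadd_inj -> : zadd a 1 = zadd a' 1 by exact: (congr1 (fun z => z.1.1) E).
have -> : t = t' by exact: (congr1 (fun z => z.1.2) E).
have /zadd_inj -> : zadd b (n - 1) = zadd b' (n - 1)
  by exact: (congr1 (fun z => z.2) E).
by [].
Qed.

Lemma psi_raw_inj n m : injective (@psi_raw n m).
Proof.
move=> [[a t] b] [[a' t'] b'] E.
have Eb : b = b' by exact: (congr1 (fun z => z.1.1) E).
have Ea : a = a' by exact: (congr1 (fun z => z.2) E).
have Et : rev t = rev t' by exact: (congr1 (fun z => val z.1.2) E).
have : t = t' by apply/val_inj; rewrite -[val t]revK Et revK.
by move=> ->; rewrite Ea Eb.
Qed.

Lemma tau_raw_inj n m : injective (@tau_raw n m).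
Proof.
move=> [[a t] b] [[a' t'] b'] E.
have /zopp_inj -> : zopp a = zopp a' by exact: (congr1 (fun z => z.1.1) E).
have /(inj_map (can_inj negbK)) Et : map negb t = map negb t'
  by exact: (congr1 (fun z => val z.1.2) E).
have /zopp_inj /zadd_inj -> : zopp (zadd b m) = zopp (zadd b' m)
  by exact: (congr1 (fun z => z.2) E).
by rewrite (val_inj Et).
Qed.

Definition ylift n m (f : yraw n m -> yraw n m)
  (fok : forall x, yoke_vertex x -> yoke_vertex (f x)) (v : yvert n m) :
  yvert n m := exist _ (f (val v)) (fok _ (valP v)).

Lemma ylift_inj n m f fok : injective f -> injective (@ylift n m f fok).
Proof. by move=> finj u v /(congr1 val) /= /finj /val_inj. Qed.

Definition phi n m : {perm yvert n m} :=
  perm (@ylift_inj n m _ (@phi_raw_ok n m) (@phi_raw_inj n m)).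
Definition psi n m : {perm yvert n m} :=
  perm (@ylift_inj n m _ (@psi_raw_ok n m) (@psi_raw_inj n m)).
Definition tau n m : {perm yvert n m} :=
  perm (@ylift_inj n m _ (@tau_raw_ok n m) (@tau_raw_inj n m)).

Definition A_yoke n m : {group {perm yvert n m}} :=
  <<[set phi n m; psi n m; tau n m]>>%G.

(* Paper's D_k (dihedral group of order 2k, presentation                    *)
(* <g, h | g^k = h^2 = 1, hgh = g^-1>) is MathComp's 'D_(2k), which is      *)
(* indexed by its order (Grp_dihedral, valid for k > 1).                    *)
(* C_2 is the cyclic group Zp 2 (the additive group of 'Z_2).               *)

(* Main.v *)
Require Import Defs.
From mathcomp Require Import all_boot all_fingroup all_solvable zmodp ssralg.
From mathcomp Require Import ring zify.
Set Implicit Arguments.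
Unset Strict Implicit.
Unset Printing Implicit Defensive.
Import GRing.Theory.
Local Notation "n %:R" := (n %:R)%R.

Lemma zaddE n (x : 'I_n.+2) k : zadd x k = (x + k%:R)%R.
Proof. by apply: val_inj; rewrite /= Zp_nat /= modnDmr. Qed.

Lemma zoppE n (x : 'I_n.+2) : zopp x = (- x)%R.
Proof. by apply: val_inj. Qed.

Lemma natN1 n : (n.+1)%:R = (-1)%R :> 'I_n.+2.
Proof.
apply: val_inj; rewrite /= Zp_nat /= !modn_small //.
Qed.

Arguments zadd : simpl never.
Arguments zopp : simpl never.

Definition phik_raw n m k (x : yraw n.+2 m) : yraw n.+2 m :=
  (zadd x.1.1 k, x.1.2, zadd x.2 (k * n.+1)).

Lemma phiE n m v : val (phi n m v) = phi_raw (val v).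
Proof. by rewrite permE. Qed.
Lemma psiE n m v : val (psi n m v) = psi_raw (val v).
Proof. by rewrite permE. Qed.
Lemma tauE n m v : val (tau n m v) = tau_raw (val v).
Proof. by rewrite permE. Qed.

Lemma phikE n m k v : val ((phi n.+2 m ^+ k)%g v) = phik_raw k (val v).
Proof.
elim: k => [|k IH].
  rewrite expg0 perm1; case: (val v) => [[a t] b].
  by rewrite /phik_raw /= !zaddE mul0n GRing.mulr0n !GRing.addr0.
rewrite expgSr permM phiE IH; case: (val v) => [[a t] b].
rewrite /phik_raw /phi_raw /= !zaddE subSS subn0 mulSn !natrD natN1.
congr (_, _, _); ring.
Qed.

Ltac pid :=
  let v := fresh "v" in
  apply/permP => v; apply/val_inj;
  rewrite ?permM ?perm1;
  repeat first [rewrite phiE | rewrite psiE | rewrite tauE | rewrite phikE];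
  case: (val v) => [[? ?] ?];
  rewrite /phik_raw /phi_raw /psi_raw /tau_raw /=;
  rewrite ?zaddE ?zoppE ?subSS ?subn0 ?natrD ?natrM ?natN1.

Ltac tup := apply: val_inj => /=; rewrite ?map_rev ?revK ?(mapK negbK) //.


Lemma I1 n m : (psi n.+2 m * psi n.+2 m = 1)%g.
Proof. pid. by congr (_, _, _); tup. Qed.
Lemma I2 n m : (tau n.+2 m * tau n.+2 m = 1)%g.
Proof. pid. congr (_, _, _); try ring; tup. Qed.
Lemma I3 n m : (tau n.+2 m * phi n.+2 m * tau n.+2 m * phi n.+2 m = 1)%g.
Proof. pid. congr (_, _, _); try ring; tup. Qed.
Lemma I5 n m : (psi n.+2 m * tau n.+2 m * (psi n.+2 m * tau n.+2 m) = phi n.+2 m ^+ m)%g.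
Proof. pid. congr (_, _, _); try ring; tup. Qed.
Lemma I4 n m j : (tau n.+2 m * (psi n.+2 m * tau n.+2 m * phi n.+2 m ^+ j) * (tau n.+2 m * (psi n.+2 m * tau n.+2 m * phi n.+2 m ^+ j)) = 1)%g.
Proof. pid. congr (_, _, _); try ring; tup. Qed.
Lemma Isq n m j : ((psi n.+2 m * tau n.+2 m * phi n.+2 m ^+ j) * (psi n.+2 m * tau n.+2 m * phi n.+2 m ^+ j) = phi n.+2 m ^+ (m + j + j))%g.
Proof. pid. congr (_, _, _); try ring; tup. Qed.
Lemma Ict n m j : (tau n.+2 m * (psi n.+2 m * tau n.+2 m * phi n.+2 m ^+ j) = (psi n.+2 m * tau n.+2 m * phi n.+2 m ^+ j) * tau n.+2 m * phi n.+2 m ^+ (m + j + j))%g.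
Proof. pid. congr (_, _, _); try ring; tup. Qed.
Lemma Icf n m j : (phi n.+2 m * (psi n.+2 m * tau n.+2 m * phi n.+2 m ^+ j) = (psi n.+2 m * tau n.+2 m * phi n.+2 m ^+ j) * phi n.+2 m)%g.
Proof. pid. congr (_, _, _); try ring; tup. Qed.


Local Open Scope group_scope.

Lemma ord2P (gT : finGroupType) (x : gT) : (x ^+ 2 = 1)%g -> x != 1%g -> #[x]%g = 2.
Proof.
move=> x2 x1; have : (#[x] %| 2)%N by rewrite order_dvdn x2.
have : #[x] != 1%N by rewrite order_eq1.
have := order_gt0 x.
by case: #[x]%g => [|[|[|k]]].
Qed.

Lemma inv_dih (gT : finGroupType) (x y : gT) :
  #[x]%g = 2 -> #[y]%g = 2 -> x != y ->
  <<[set x; y]>>%g \isog [set: gsort 'D_#|<<[set x; y]>>%g|]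
  /\ #|<<[set x; y]>>%g| = (#[x * y]%g).*2.
Proof.
set G := <<[set x; y]>>%g.
move=> ox oy ne_x_y; pose q := #[x * y]%g.
have q_gt1: q > 1 by rewrite order_gt1 -eq_invg_mul invg_expg ox.
have homG: G \homg [set: gsort 'D_q.*2].
  rewrite Grp'_dihedral //; apply/existsP; exists (x, y); rewrite /= !xpair_eqE.
  by rewrite joing_idl joing_idr -{1}ox -oy !expg_order !eqxx.
suff oG: #|G| = q.*2 by split=> //; rewrite oG isogEcard oG card_dihedral ?leqnn ?andbT.
have: #|G| %| q.*2  by rewrite -card_dihedral ?card_homg.
have Gxy: (<[x * y]> \subset G)%g.
  by rewrite cycle_subG groupM ?mem_gen ?set21 ?set22.
have[k oG]: exists k, #|G| = (k * q)%N by apply/dvdnP; rewrite cardSg.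
rewrite oG -mul2n dvdn_pmul2r ?order_gt0 ?dvdn_divisors // !inE /=.
case/pred2P=> [k1 | -> //]; case/negP: ne_x_y.
have cycG: cyclic G.
  apply/cyclicP; exists (x * y)%g; apply/eqP.
  by rewrite eq_sym eqEcard Gxy oG k1 mul1n leqnn.
have: (<[x]> == <[y]>)%g.
  by rewrite (eq_subG_cyclic cycG) ?genS ?subsetUl ?subsetUr -?orderE ?ox ?oy.
by rewrite eqEcard cycle_subG /= cycle2g // !inE -order_eq1 ox; case/andP.
Qed.

Lemma natN0 n : (n.+2)%:R = 0%R :> 'I_n.+2.
Proof. by apply: val_inj; rewrite /= Zp_nat /= modnDm add1n modnn. Qed.

Lemma v0_ok n m : yoke_vertex ((ord0 : 'I_n.+2), [tuple of nseq m false], (ord0 : 'I_n.+2)).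
Proof. by rewrite /yoke_vertex /ysum /= count_nseq mul0n. Qed.

Definition v0 n m : yvert n.+2 m := exist (@yoke_vertex n.+2 m) _ (v0_ok n m).

Lemma not1 (T : finType) (p : {perm T}) v : p v != v -> p != 1.
Proof. by apply: contra => /eqP ->; rewrite perm1. Qed.

Lemma phiN n m : phi n.+2 m ^+ n.+2 = 1.
Proof.
apply/permP => v; apply/val_inj; rewrite phikE perm1.
case: (val v) => [[a t] b]; rewrite /phik_raw /= !zaddE natrM natN0.
by congr (_, _, _); ring.
Qed.

Lemma phik_v0 n m k : (val ((phi n.+2 m ^+ k) (v0 n m))).1.1 = inZp k :> 'I_n.+2.
Proof.
rewrite phikE /phik_raw /=; apply: val_inj => /=.
by rewrite add0n.
Qed.

Lemma phi_order n m : #[phi n.+2 m] = n.+2.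
Proof.
apply/eqP; rewrite eqn_dvd order_dvdn phiN eqxx /=.
have := phik_v0 n m #[phi n.+2 m]; rewrite expg_order perm1 /=.
by move/(congr1 val) => /= /esym /eqP.
Qed.

Lemma phik_bits n m k v : (val ((phi n.+2 m ^+ k) v)).1.2 = (val v).1.2.
Proof. by rewrite phikE. Qed.

Lemma cycle_phi_bits n m p v :
  p \in <[phi n.+2 m]> -> (val (p v)).1.2 = (val v).1.2.
Proof. by case/cycleP => k ->; apply: phik_bits. Qed.

Lemma sig_bits n m j :
  val (val ((psi n.+2 m * tau n.+2 m * phi n.+2 m ^+ j) (v0 n m))).1.2 = nseq m true.
Proof.
rewrite !permM phik_bits tauE psiE /=.
by rewrite map_rev map_nseq rev_nseq.
Qed.

Lemma tau_bits n m :
  val (val (tau n.+2 m (v0 n m))).1.2 = nseq m true.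
Proof. by rewrite tauE /= map_nseq. Qed.

Lemma tauphi_bits n m :
  val (val ((tau n.+2 m * phi n.+2 m) (v0 n m))).1.2 = nseq m true.
Proof. by rewrite permM phiE /= tau_bits. Qed.

Lemma nseq_neq m : 0 < m -> nseq m true != nseq m false.
Proof. by case: m. Qed.

Lemma bits_not1 n m (p : {perm yvert n.+2 m}) : 0 < m ->
  val (val (p (v0 n m))).1.2 = nseq m true -> p != 1.
Proof.
move=> m0 E; apply: (@not1 _ _ (v0 n m)); apply/eqP => /(congr1 (fun v => val (val v).1.2)).
by rewrite E /= => /eqP; rewrite (negbTE (nseq_neq m0)).
Qed.

Lemma bits_notin n m (p : {perm yvert n.+2 m}) : 0 < m ->
  val (val (p (v0 n m))).1.2 = nseq m true -> p \notin <[phi n.+2 m]>.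
Proof.
move=> m0 E; apply/negP => /(cycle_phi_bits (v0 n m)) /(congr1 val).
by rewrite E /= => /eqP; rewrite (negbTE (nseq_neq m0)).
Qed.

Lemma exists_j1 n m : odd n.+2 || odd m -> exists j, ((m + j + j) %% n.+2 = 1)%N.
Proof.
move=> H; have hm := odd_double_half m; set h := m./2 in hm.
case om: (odd m) hm => /= hm.
  exists (h * n.+1)%N.
  have -> : (m + h * n.+1 + h * n.+1 = (h * 2) * n.+2 + 1)%N.
    rewrite -hm -muln2; nia.
  by rewrite modnMDl modn_small.
rewrite om orbF in H.
have hN := odd_double_half n.+2; rewrite H in hN; set r := (n.+2)./2 in hN.
exists (h * n.+1 + r.+1)%N.
have -> : (m + (h * n.+1 + r.+1) + (h * n.+1 + r.+1) = (h * 2 + 1) * n.+2 + 1)%N.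
  rewrite -hm -muln2. rewrite -muln2 /= in hN. nia.
by rewrite modnMDl modn_small.
Qed.

Lemma fA n m : phi n m \in A_yoke n m.
Proof. by rewrite mem_gen // !inE eqxx. Qed.
Lemma pA n m : psi n m \in A_yoke n m.
Proof. by rewrite mem_gen // !inE eqxx orbT. Qed.
Lemma hA n m : tau n m \in A_yoke n m.
Proof. by rewrite mem_gen // !inE eqxx !orbT. Qed.

Lemma case4a n m : 0 < m -> odd n.+2 || odd m ->
  A_yoke n.+2 m \isog [set: gsort 'D_((n.+2).*2.*2)].
Proof.
move=> m0 Hodd.
set f := phi n.+2 m; set p := psi n.+2 m; set h := tau n.+2 m.
have [j Ej] := exists_j1 Hodd.
set g := p * h * f ^+ j.
have gg : g * g = f.
  by rewrite /g Isq -(@expg_mod _ n.+2 (m + j + j) f (phiN n m)) Ej expg1.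
have gnot : g \notin <[f]> by apply: bits_notin => //; exact: sig_bits.
have hh : h * h = 1 := I2 n m.
have ofo : #[f] = n.+2 := phi_order n m.
have f1 : f != 1 by rewrite -order_eq1 ofo.
have o_h : #[h] = 2 by apply: ord2P; [rewrite expgS expg1 hh | exact: bits_not1 (tau_bits n m)].
have xy : h * (h * g) = g by rewrite mulgA hh mul1g.
have o_hg : #[h * g] = 2.
  apply: ord2P; first by rewrite expgS expg1 /g I4.
  apply/eqP => E; move: xy; rewrite E mulg1 => gh.
  by move: gg; rewrite -gh hh => /esym/eqP; rewrite (negbTE f1).
have ne : h != h * g.
  apply/eqP => /(congr1 (mulg h^-1)); rewrite !mulKg => g1.
  by move: gnot; rewrite -g1 mulVg group1.
have [iso card] := inv_dih o_h o_hg ne.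
rewrite xy in card.
have og : #[g] = (n.+2).*2.
  have of2 : #[g ^+ 2] = n.+2 by rewrite expgS expg1 gg ofo.
  rewrite orderXgcd in of2.
  case Od: (odd #[g]).
    have gc : gcdn #[g] 2 = 1%N.
      by rewrite gcdnC; apply/eqP; rewrite -/(coprime 2 _) coprime2n Od.
    exfalso; move: gnot; rewrite gc divn1 in of2.
    have e2 : (2 * (#[g].+1)./2)%N = #[g].+1.
      by rewrite mul2n [in RHS](esym (odd_double_half #[g].+1)) /= Od.
    have : g = (g ^+ 2) ^+ ((#[g].+1)./2) by rewrite -expgM e2 expgSr expg_order mul1g.
    by move=> ->; rewrite expgS expg1 gg mem_cycle.
  have gc : gcdn #[g] 2 = 2 by apply/gcdn_idPr; rewrite dvdn2 Od.
  rewrite gc in of2.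
  have d2 : (2 %| #[g])%N by rewrite dvdn2 Od.
  by rewrite -(divnK d2) of2 muln2.
have AE : A_yoke n.+2 m = <<[set h; h * g]>> :> {set _}.
  have hG : h \in <<[set h; h * g]>> by rewrite mem_gen // !inE eqxx.
  have hgG : h * g \in <<[set h; h * g]>> by rewrite mem_gen // !inE eqxx orbT.
  have gG : g \in <<[set h; h * g]>> by have := groupM hG hgG; rewrite xy.
  have fG : f \in <<[set h; h * g]>> by have := groupM gG gG; rewrite gg.
  have pE : p = g * (f ^+ j)^-1 * h by rewrite /g mulgK -mulgA hh mulg1.
  have gA : g \in A_yoke n.+2 m.
    by rewrite /g groupM ?groupX ?fA // groupM ?pA ?hA.
  apply/eqP; rewrite eqEsubset; apply/andP; split; rewrite gen_subG.
    have pG : p \in <<[set h; h * g]>>.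
      rewrite pE groupM // groupM // groupV groupX //.
    by apply/subsetP => x; rewrite !inE -orbA => /or3P [] /eqP ->.
  apply/subsetP => x; rewrite !inE => /orP [] /eqP ->; first exact: hA.
  by rewrite groupM ?hA.
by rewrite AE -og -card.
Qed.

Definition HPb n m (p : {perm yvert n.+2 m}) : bool :=
  [forall v, forall w, ((val v).1.1 == (val w).1.1) ==> ((val (p v)).1.1 == (val (p w)).1.1)].

Lemma HP_group n m : group_set [set p : {perm yvert n.+2 m} | HPb p].
Proof.
apply/group_setP; split.
  by rewrite inE; apply/forallP => v; apply/forallP => w; rewrite !perm1; apply/implyP.
move=> x y; rewrite !inE => /forallP Hx /forallP Hy.
apply/forallP => v; apply/forallP => w; apply/implyP => E; rewrite !permM.
have := forallP (Hx v) w; rewrite E /= => E2.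
by have := forallP (Hy (x v)) (x w); rewrite E2.
Qed.

Canonical HPG n m := Group (HP_group n m).

Lemma w_ok n m : yoke_vertex ((ord0 : 'I_n.+2), cons_tuple true (nseq_tuple m false),
   (Ordinal (ltnSn n.+1) : 'I_n.+2)).
Proof. by rewrite /yoke_vertex /ysum /= count_nseq mul0n add0n add1n modnn. Qed.

Definition w1 n m : yvert n.+2 m.+1 := exist (@yoke_vertex n.+2 m.+1) _ (w_ok n m).

Lemma case4b n m : ~~ odd n.+2 -> ~~ odd m.+1 ->
  A_yoke n.+2 m.+1 \isog setX [set: gsort 'D_((n.+2).*2)] (Zp 2).
Proof.
move=> eN em.
set f := phi n.+2 m.+1; set p := psi n.+2 m.+1; set h := tau n.+2 m.+1.
pose j := ((m.+1)./2 * n.+1)%N.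
have Ej : ((m.+1 + j + j) %% n.+2 = 0)%N.
  have hm := odd_double_half m.+1; rewrite (negbTE em) add0n in hm.
  have -> : (m.+1 + j + j = ((m.+1)./2 * 2) * n.+2)%N.
    rewrite /j; rewrite -muln2 in hm. nia.
  by rewrite modnMl.
set z := p * h * f ^+ j.
have ff : f ^+ (m.+1 + j + j) = 1.
  by rewrite -(@expg_mod _ n.+2 (m.+1 + j + j) f (phiN n m.+1)) Ej expg0.
have zz : z * z = 1 by rewrite /z Isq ff.
have hh : h * h = 1 := I2 n m.+1.
have ofo : #[f] = n.+2 := phi_order n m.+1.
have f1 : f != 1 by rewrite -order_eq1 ofo.
have o_z : #[z] = 2.
  by apply: ord2P; [rewrite expgS expg1 zz | exact: bits_not1 (sig_bits n m.+1 j)].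
have o_h : #[h] = 2 by apply: ord2P; [rewrite expgS expg1 hh | exact: bits_not1 (tau_bits n m.+1)].
have o_hf : #[h * f] = 2.
  apply: ord2P; first by rewrite expgS expg1 mulgA I3.
  exact: bits_not1 (tauphi_bits n m.+1).
have ne : h != h * f.
  apply/eqP => /(congr1 (mulg h^-1)); rewrite !mulKg mulVg => f1'.
  by move: f1; rewrite -f1' eqxx.
have [isoD cardD] := inv_dih o_h o_hf ne.
rewrite mulgA hh mul1g ofo in cardD.
set D := <<[set h; h * f]>>%g.
have czh : commute h z by rewrite /commute Ict ff mulg1.
have czf : commute f z by rewrite /commute Icf.
have cent : <[z]> \subset 'C(D).
  rewrite cycle_subG /D /= cent_gen -sub_cent1.
  apply/subsetP => x; case/set2P => ->; apply/cent1P; first exact: czh.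
  by apply/commute_sym/commuteM; apply/commute_sym.
have DH : D \subset HPG n m.+1.
  rewrite gen_subG; apply/subsetP => x; rewrite !inE => /orP [] /eqP ->.
    apply/forallP => v; apply/forallP => w; apply/implyP => /eqP E.
    by rewrite !tauE /tau_raw /= E.
  apply/forallP => v; apply/forallP => w; apply/implyP => /eqP E.
  by rewrite !permM !phiE !tauE /phi_raw /tau_raw /= E.
have zH : z \notin HPG n m.+1.
  rewrite inE; apply/negP => /forallP /(_ (v0 n m.+1)) /forallP /(_ (w1 n m)) /implyP.
  rewrite /= => /(_ isT); rewrite !permM !phikE !tauE !psiE /phik_raw /tau_raw /psi_raw /=.
  by move/eqP/zadd_inj/zopp_inj/(congr1 val).
have tri : D :&: <[z]> = 1.
  rewrite (cycle2g o_z); apply/eqP; rewrite eqEsubset; apply/andP; split; last first.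
    by rewrite sub1set !inE group1 eqxx.
  apply/subsetP => x; rewrite inE => /andP [xD]; rewrite !inE => /orP [] /eqP xE.
    by rewrite xE.
  by move: zH; rewrite -xE (subsetP DH x xD).
have AE : (D <*> <[z]>)%G = A_yoke n.+2 m.+1 :> {set _}.
  have zA : z \in A_yoke n.+2 m.+1.
    by rewrite /z groupM ?groupX ?fA // groupM ?pA ?hA.
  apply/eqP; rewrite eqEsubset; apply/andP; split.
    rewrite join_subG cycle_subG zA andbT gen_subG.
    apply/subsetP => x; rewrite !inE => /orP [] /eqP ->; first exact: hA.
    by rewrite groupM ?hA ?fA.
  have hJ : h \in (D <*> <[z]>)%G.
    by rewrite (subsetP (joing_subl _ _)) // mem_gen // !inE eqxx.
  have hfJ : h * f \in (D <*> <[z]>)%G.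
    by rewrite (subsetP (joing_subl _ _)) // mem_gen // !inE eqxx orbT.
  have zJ : z \in (D <*> <[z]>)%G.
    by rewrite (subsetP (joing_subr _ _)) // cycle_id.
  have fJ : f \in (D <*> <[z]>)%G.
    by have := groupM hJ hfJ; rewrite mulgA hh mul1g.
  have pE : p = z * f ^- j * h by rewrite /z mulgK -mulgA hh mulg1.
  have pJ : p \in (D <*> <[z]>)%G.
    by rewrite pE groupM // groupM // groupV groupX.
  rewrite gen_subG.
  by apply/subsetP => x; rewrite !inE -orbA => /or3P [] /eqP ->.
have dp : D \x <[z]> = A_yoke n.+2 m.+1.
  by rewrite dprodE // -cent_joinEr //; apply: val_inj; rewrite /= -AE.
apply: (isog_dprod dp (setX_dprod _ _)).
  apply: isog_trans (isog_setX1 _ _).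
  by rewrite -cardD.
apply: isog_trans (isog_set1X _ _).
rewrite isog_cyclic_card ?cycle_cyclic // card_Zp // -orderE o_z eqxx andbT.
by apply: prime_cyclic; rewrite card_Zp.
Qed.

Lemma cyc2 (gT : finGroupType) (x : gT) : #[x] = 2 -> <[x]> \isog Zp 2.
Proof.
move=> ox; rewrite isog_cyclic_card ?cycle_cyclic // card_Zp // -orderE ox eqxx andbT.
by apply: prime_cyclic; rewrite card_Zp.
Qed.

Lemma psi_tau0 n : psi n.+2 0 = tau n.+2 0.
Proof.
apply/permP => v; apply/val_inj; rewrite psiE tauE.
case: v => [[[a t] b] /= H]; rewrite /psi_raw /tau_raw /= !zoppE zaddE.
have E : (a + b = 0 :> 'I_n.+2)%R.
  by apply: val_inj; move: H; rewrite /yoke_vertex /ysum /= (tuple0 t) addn0 => /eqP.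
have bE : b = (- a)%R by rewrite -[b](addKr a) E addr0.
congr (_, _, _).
- by rewrite bE.
- by apply: val_inj; rewrite /= (tuple0 t).
- by rewrite bE; ring.
Qed.

Lemma u_ok n : yoke_vertex ((Ordinal (isT : 1 < n.+3) : 'I_n.+3), [tuple] : 0.-tuple bool,
   (Ordinal (ltnSn n.+2) : 'I_n.+3)).
Proof. by rewrite /yoke_vertex /ysum /= add1n modnn. Qed.

Lemma case2 n : A_yoke n.+3 0 \isog [set: gsort 'D_((n.+3).*2)].
Proof.
set f := phi n.+3 0; set p := psi n.+3 0; set h := tau n.+3 0.
have hh : h * h = 1 := I2 n.+1 0.
have ofo : #[f] = n.+3 := phi_order n.+1 0.
have f1 : f != 1 by rewrite -order_eq1 ofo.
have o_h : #[h] = 2.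
  apply: ord2P; first by rewrite expgS expg1 hh.
  apply: (@not1 _ _ (exist (@yoke_vertex n.+3 0) _ (u_ok n))).
  apply/eqP => /(congr1 (fun v => val (val v).1.1)).
  by rewrite tauE /tau_raw /= /zopp /= subSS subn0 modn_small.
have o_hf : #[h * f] = 2.
  apply: ord2P; first by rewrite expgS expg1 mulgA I3.
  apply: (@not1 _ _ (v0 n.+1 0)).
  apply/eqP => /(congr1 (fun v => val (val v).1.1)).
  by rewrite permM phiE tauE /tau_raw /phi_raw /= /zadd /zopp /= modnn.
have ne : h != h * f.
  apply/eqP => /(congr1 (mulg h^-1)); rewrite !mulKg mulVg => f1'.
  by move: f1; rewrite -f1' eqxx.
have [iso card] := inv_dih o_h o_hf ne.
rewrite mulgA hh mul1g ofo in card.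
have AE : A_yoke n.+3 0 = <<[set h; h * f]>> :> {set _}.
  have hG : h \in <<[set h; h * f]>> by rewrite mem_gen // !inE eqxx.
  have hfG : h * f \in <<[set h; h * f]>> by rewrite mem_gen // !inE eqxx orbT.
  have fG : f \in <<[set h; h * f]>>.
    by have := groupM hG hfG; rewrite mulgA hh mul1g.
  have pG : p \in <<[set h; h * f]>> by rewrite /p psi_tau0.
  apply/eqP; rewrite eqEsubset; apply/andP; split; rewrite gen_subG.
    by apply/subsetP => x; rewrite !inE -orbA => /or3P [] /eqP ->.
  apply/subsetP => x; rewrite !inE => /orP [] /eqP ->; first exact: hA.
  by rewrite groupM ?hA ?fA.
by rewrite AE -card.
Qed.

Lemma eq1 (x y : 'I_1) : x = y.
Proof. by rewrite (ord1 x) (ord1 y). Qed.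

Lemma v1_ok m : yoke_vertex ((ord0 : 'I_1), [tuple of nseq m false], (ord0 : 'I_1)).
Proof. by rewrite /yoke_vertex modn1. Qed.
Definition v1 m : yvert 1 m := exist (@yoke_vertex 1 m) _ (v1_ok m).

Lemma phi1 m : phi 1 m = 1.
Proof.
apply/permP => v; apply/val_inj; rewrite phiE perm1.
by case: (val v) => [[a t] b]; congr (_, _, _); apply: eq1.
Qed.

Lemma psi1_sq m : psi 1 m * psi 1 m = 1.
Proof.
apply/permP => v; apply/val_inj; rewrite permM !psiE perm1.
case: (val v) => [[a t] b] /=; congr (_, _, _); apply: val_inj; by rewrite /= revK.
Qed.

Lemma tau1_sq m : tau 1 m * tau 1 m = 1.
Proof.
apply/permP => v; apply/val_inj; rewrite permM !tauE perm1.
case: (val v) => [[a t] b] /=; congr (_, _, _); try apply: eq1.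
by apply: val_inj; rewrite /= (mapK negbK).
Qed.

Lemma comm1 m : commute (psi 1 m) (tau 1 m).
Proof.
apply/permP => v; apply/val_inj; rewrite !permM.
repeat first [rewrite tauE | rewrite psiE].
case: (val v) => [[a t] b] /=; congr (_, _, _); try apply: eq1.
by apply: val_inj; rewrite /= map_rev.
Qed.

Lemma tau1_not1 m : 0 < m -> tau 1 m != 1.
Proof.
move=> m0; apply: (@not1 _ _ (v1 m)); apply/eqP => /(congr1 (fun v => val (val v).1.2)).
by rewrite tauE /= map_nseq => /eqP; rewrite (negbTE (nseq_neq m0)).
Qed.

Lemma part1a : A_yoke 1 0 :=: 1.
Proof.
have all1 (p : {perm yvert 1 0}) : p = 1.
  apply/permP => v; rewrite perm1; apply/val_inj.
  case: (val (p v)) (val v) => [[a t] b] [[a' t'] b'].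
  by rewrite (tuple0 t) (tuple0 t') (eq1 a a') (eq1 b b').
apply/eqP; rewrite eqEsubset sub1G andbT.
by apply/subsetP => x _; rewrite (all1 x) inE.
Qed.

Lemma part1b : A_yoke 2 0 \isog Zp 2.
Proof.
have h1 : tau 2 0 = 1.
  apply/permP => v; apply/val_inj; rewrite tauE perm1.
  case: v => [[[a t] b] /= _]; rewrite /tau_raw /=.
  have op (x : 'I_2) : zopp x = x by case: x => [[|[|k]] Hk] //; apply: val_inj.
  congr (_, _, _); first exact: op.
    by apply: val_inj; rewrite /= (tuple0 t).
  by rewrite op; apply: val_inj; rewrite /= /zadd /= addn0 modn_small.
have p1 : psi 2 0 = 1 by rewrite psi_tau0 h1.
have AE : A_yoke 2 0 = <[phi 2 0]> :> {set _}.
  apply/eqP; rewrite eqEsubset cycle_subG fA andbT gen_subG.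
  apply/subsetP => x; rewrite !inE -orbA => /or3P [] /eqP ->.
  - exact: cycle_id.
  - by rewrite p1 group1.
  - by rewrite h1 group1.
have -> : A_yoke 2 0 = <[phi 2 0]>%G by apply: val_inj.
exact: cyc2 (phi_order 0 0).
Qed.

Lemma part1c : A_yoke 1 1 \isog Zp 2.
Proof.
have p1 : psi 1 1 = 1.
  apply/permP => v; apply/val_inj; rewrite psiE perm1.
  case: (val v) => [[a t] b] /=; congr (_, _, _); try apply: eq1.
  by apply: val_inj; case: t => [[|x [|y s]]].
have o_h : #[tau 1 1] = 2.
  by apply: ord2P; [rewrite expgS expg1 tau1_sq | exact: tau1_not1].
have AE : A_yoke 1 1 = <[tau 1 1]> :> {set _}.
  apply/eqP; rewrite eqEsubset cycle_subG hA andbT gen_subG.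
  apply/subsetP => x; rewrite !inE -orbA => /or3P [] /eqP ->.
  - by rewrite phi1 group1.
  - by rewrite p1 group1.
  - exact: cycle_id.
have -> : A_yoke 1 1 = <[tau 1 1]>%G by apply: val_inj.
exact: cyc2 o_h.
Qed.

Lemma w2_ok m : yoke_vertex ((ord0 : 'I_1), cons_tuple true (nseq_tuple m.+1 false), (ord0 : 'I_1)).
Proof. by rewrite /yoke_vertex modn1. Qed.
Definition w2 m : yvert 1 m.+2 := exist (@yoke_vertex 1 m.+2) _ (w2_ok m).

Lemma part3 m : A_yoke 1 m.+2 \isog setX (Zp 2) (Zp 2).
Proof.
set p := psi 1 m.+2; set h := tau 1 m.+2.
have o_h : #[h] = 2.
  by apply: ord2P; [rewrite expgS expg1 tau1_sq | exact: tau1_not1].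
have o_p : #[p] = 2.
  apply: ord2P; first by rewrite expgS expg1 psi1_sq.
  apply: (@not1 _ _ (w2 m)); apply/eqP => /(congr1 (fun v => val (val v).1.2)).
  rewrite psiE /= !rev_cons rev_nseq; clear; by case: m.
have ph : p != h.
  apply/eqP => /(congr1 (fun q : {perm _} => val (val (q (v1 m.+2))).1.2)).
  rewrite psiE tauE /= => /(congr1 (fun s => true \in s)).
  by rewrite mem_rev !inE /= mem_nseq andbF.
have cph : commute p h := comm1 m.+2.
have tri : <[p]> :&: <[h]> = 1.
  rewrite (cycle2g o_p) (cycle2g o_h); apply/eqP; rewrite eqEsubset; apply/andP; split; last first.
    by rewrite sub1set !inE eqxx.
  apply/subsetP => x; rewrite !inE => /andP [/orP [] /eqP -> // /orP [] /eqP E].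
    by move: o_p; rewrite E order1.
  by move: ph; rewrite E eqxx.
have cent : <[h]> \subset 'C(<[p]>) by apply: cents_cycle; apply: commute_sym.
have AE : (<[p]> <*> <[h]>)%G = A_yoke 1 m.+2 :> {set _}.
  apply/eqP; rewrite eqEsubset join_subG !cycle_subG pA hA /= gen_subG.
  have pJ : p \in (<[p]> <*> <[h]>)%G by rewrite (subsetP (joing_subl _ _)) // cycle_id.
  have hJ : h \in (<[p]> <*> <[h]>)%G by rewrite (subsetP (joing_subr _ _)) // cycle_id.
  by apply/subsetP => x; rewrite !inE -orbA => /or3P [] /eqP -> //; rewrite phi1 group1.
have dp : <[p]> \x <[h]> = A_yoke 1 m.+2.
  by rewrite dprodE // -cent_joinEr //; apply: val_inj; rewrite /= -AE.
apply: (isog_dprod dp (setX_dprod _ _)).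
  exact: isog_trans (cyc2 o_p) (isog_setX1 _ _).
exact: isog_trans (cyc2 o_h) (isog_set1X _ _).
Qed.

Close Scope group_scope.

Theorem theorem6p4 :
  (* (1) *)
  [/\ A_yoke 1 0 :=: 1%G,
      A_yoke 2 0 \isog Zp 2 &
      A_yoke 1 1 \isog Zp 2]
  (* (2) *)
  /\ (forall n : nat, 2 < n -> A_yoke n 0 \isog ('D_(n.*2))%g)
  (* (3) *)
  /\ (forall m : nat, 1 < m -> A_yoke 1 m \isog setX (Zp 2) (Zp 2))
  (* (4) *)
  /\ (forall n m : nat, 1 < n -> 0 < m ->
        (odd n || odd m -> A_yoke n m \isog ('D_((n.*2).*2))%g)
        /\ (~~ odd n && ~~ odd m -> A_yoke n m \isog setX ('D_(n.*2))%g (Zp 2))).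
Proof.
split; first by split; [exact: part1a | exact: part1b | exact: part1c].
split; first by case=> [|[|[|n]]] // _; exact: case2.
split; first by case=> [|[|m]] // _; exact: part3.
case=> [|[|n]] // m _; case: m => [|m] // _; split.
  by move=> H; apply: case4a.
by case/andP => H1 H2; apply: case4b.
Qed.
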